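(* If $G$ is a uniformly dense (finite, simple) graph with at least one edge, then its clique number satisfies $\operatorname{cl}(G)\le 2\rho(G)$.
   Context: For $A\subseteq E$, $c(A)$ is the number of components of $(V,A)$, $\operatorname{rank}(A)=|V|-c(A)$, $\rho(A)=|A|/\operatorname{rank}(A)$, $\rho(G)=\rho(E)$; $G$ is uniformly dense if $\rho(A)\le\rho(G)$ for all nonempty $A\subseteq E$. $\operatorname{cl}(G)$ is the largest number of vertices of a clique (pairwise adjacent vertex set). *)

(* Defs.v *)
From mathcomp Require Import all_boot all_order all_algebra.
Set Implicit Arguments. Unset Strict Implicit. Unset Printing Implicit Defensive.
Import Order.TTheory GRing.Theory Num.Theory.

(* A finite simple graph: vertex set T (a finType), adjacency e : rel T,
   assumed symmetric and irreflexive in the theorem. Edges are represented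
   as 2-element vertex sets [set x; y]. *)

Definition simple_graph (T : finType) (e : rel T) : Prop :=
  symmetric e /\ irreflexive e.

Definition edges (T : finType) (e : rel T) : {set {set T}} :=
  [set [set x; y] | x in T, y in T & e x y].

Definition sub_adj (T : finType) (A : {set {set T}}) : rel T :=
  fun x y => (x != y) && ([set x; y] \in A).

Definition ncomp (T : finType) (A : {set {set T}}) : nat :=
  n_comp (connect (sub_adj A)) T.

Definition grank (T : finType) (A : {set {set T}}) : nat :=
  #|T| - ncomp A.

Definition rho (T : finType) (A : {set {set T}}) : rat :=
  (#|A|%:R / (grank A)%:R)%R.

Definition rhoG (T : finType) (e : rel T) : rat := rho (edges e).

Definition uniformly_dense (T : finType) (e : rel T) : Prop :=
  forall A : {set {set T}}, A \subset edges e -> A != set0 ->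
    (rho A <= rhoG e)%R.

Definition is_clique (T : finType) (e : rel T) (K : {set T}) : bool :=
  [forall x in K, forall y in K, (x != y) ==> e x y].

Definition clique_number (T : finType) (e : rel T) : nat :=
  \max_(K : {set T} | is_clique e K) #|K|.

(* Main.v *)
Require Import Defs.
From mathcomp Require Import all_boot all_order all_algebra.
From mathcomp Require Import zify.
Import Order.TTheory GRing.Theory Num.Theory.

Lemma connect_connect (T : finType) (r : rel T) x y :
  connect (connect r) x y = connect r x y.
Proof.
apply/idP/idP; last exact: connect1.
move/connectP=> [p Hp ->]; elim: p x Hp => [|z p IH] x /=; first by rewrite connect0.
by move/andP=> [h1 h2]; apply: connect_trans h1 (IH _ h2).
Qed.

Lemma bin2_double n : ('C(n, 2)).*2 = n * n.-1.
Proof.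
elim: n => [|n IH] //. rewrite binS bin1 doubleD IH.
case: n {IH} => [|n] //=. lia.
Qed.

Lemma clique_bound (T : finType) (e : rel T) (K : {set T}) :
  simple_graph e -> uniformly_dense e -> is_clique e K -> 2 <= #|K| ->
  ((#|K|)%:R <= 2 * rhoG e :> rat)%R.
Proof.
move=> [esym eirr] ud cl k2.
set A := [set B : {set T} | B \subset K & #|B| == 2].
have clP : forall x y, x \in K -> y \in K -> x != y -> e x y.
  move=> x y xK yK xy; move/forallP: cl => /(_ x); rewrite xK /=.
  by move/forallP => /(_ y); rewrite yK xy.
have AE : A \subset edges e.
  apply/subsetP => B; rewrite inE => /andP[BK /cards2P [x [y [xy BE]]]].
  move: BK; rewrite BE subUset !sub1set => /andP[xK yK].
  by apply/imset2P; exists x y; rewrite ?inE //; apply: clP.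
have cardA : #|A| = 'C(#|K|, 2) by rewrite cards_draws.
have [k0 k0K] : exists k0, k0 \in K.
  by apply/set0Pn; rewrite -card_gt0; lia.
have A0 : A != set0.
  by rewrite -card_gt0 cardA bin_gt0.
set sa := sub_adj A.
have saE : forall x y, sa x y = [&& x != y, x \in K & y \in K].
  move=> x y; rewrite /sa /sub_adj inE subUset !sub1set cards2.
  by case: (x != y); rewrite ?andbT ?andbF.
have sasym : symmetric sa.
  by move=> x y; rewrite !saE eq_sym; case: (x \in K); case: (y \in K).
have csym : connect_sym sa := sym_connect_sym sasym.
have F1 : forall x y, x \notin K -> connect sa x y -> y = x.
  move=> x y xK /connectP [[|z p] Hp ->] //=.
  by move: Hp => /= /andP[]; rewrite saE (negbTE xK) andbF.
have F2 : forall x y, x \in K -> y \in K -> connect sa x y.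
  move=> x y xK yK; case: (eqVneq x y) => [->|xy]; first exact: connect0.
  by apply: connect1; rewrite saE xy xK yK.
have clK : closed sa (mem K).
  move=> x y; rewrite saE => /and3P[_ -> ->] //.
set r := fingraph.root sa k0.
have rK : r \in K.
  by rewrite -(closed_connect clK (connect_root sa k0)).
have rootsE : forall x, fingraph.roots sa x = (x \in r |: ~: K).
  move=> x; rewrite !inE /fingraph.roots.
  case xK: (x \in K) => /=.
    have -> : fingraph.root sa x = r by apply/(fingraph.rootP csym)/F2.
    by rewrite orbF eq_sym.
  by rewrite (F1 _ _ (negbT xK) (connect_root sa x)) eqxx orbT.
have ncA : ncomp A = #|T| - #|K| + 1.
  rewrite /ncomp (eq_n_comp (@connect_connect T sa)) /n_comp_mem.
  have -> : #|predI (fingraph.roots sa) (mem T)| = #|r |: ~: K|.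
    apply: eq_card => x; by rewrite !inE /= rootsE !inE andbT.
  have := cardsU1 r (~: K); rewrite !inE rK /=.
  have : #|T| = #|K| + #|~: K| by rewrite cardsC. move=> hT hU; by rewrite hU hT addKn addnC.
have grA : grank A = #|K| - 1.
  rewrite /grank ncA. have : #|T| = #|K| + #|~: K| by rewrite cardsC. move=> hT; rewrite hT addKn. lia.
have rhoA : (2 * rho A = (#|K|)%:R :> rat)%R.
  rewrite /rho grA cardA mulrA -natrM mul2n bin2_double.
  have -> : (#|K|).-1 = #|K| - 1 by lia.
  rewrite natrM mulfK //. rewrite pnatr_eq0. lia.
rewrite -rhoA. apply: ler_wpM2l => //. exact: ud.
Qed.

Theorem proposition3p7 (T : finType) (e : rel T) :
  simple_graph e ->
  edges e != set0 ->
  uniformly_dense e ->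
  ((clique_number e)%:R <= 2 * rhoG e :> rat)%R.
Proof.
move=> sg E0 ud.
case/set0Pn: E0 => B /imset2P [x y _]; rewrite inE => /andP[_ exy] _.
have xy : x != y by apply/eqP => exy'; move: exy; rewrite exy' (proj2 sg).
have c2 : is_clique e [set x; y].
  apply/forallP => a; apply/implyP => ha; apply/forallP => b; apply/implyP => hb.
  apply/implyP => ab; move: ha hb ab; rewrite !inE.
  move=> /orP[]/eqP-> /orP[]/eqP->; rewrite ?eqxx // => _ //.
  by rewrite (proj1 sg).
rewrite /clique_number (bigop.bigmax_eq_arg [set x; y]) //.
case: arg_maxnP => // K cK maxK.
apply: clique_bound => //.
have := maxK _ c2. by rewrite cards2 xy.
Qed.
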